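(* There exist constants $C,\epsilon_0>0$ such that for all $L\in\mathbb N^{2}$ and $\eta>0$ with $\eta\,\mathrm{vol}\Lambda_{L}\le\epsilon_0$, all $v\in(2\mathbb Z)^{2}$ and all $z\in\mathbb C\setminus\mathbb T$, \[\mathbb P\Big(\mathrm{dist}\big(z,\sigma(U^{\Lambda_{L}+v}_{\omega}(0))\big)\le\eta\Big)\le C\,\eta\,\mathrm{vol}\Lambda_{L}.\]
   Context: Let $\{e_{\mu}\}_{\mu\in\mathbb Z^{2}}$ be the standard basis of $\ell^{2}(\mathbb Z^{2})$ and $\mathbb T=\{z\in\mathbb C:|z|=1\}$. Let $\Omega=\mathbb T^{\mathbb Z^{2}}$ with the product $\sigma$-algebra and probability $\mathbb P=\bigotimes_{\mu\in\mathbb Z^{2}}d\ell$, $d\ell$ normalized Lebesgue measure on $\mathbb T$. $D_{\omega}e_{\mu}=\omega_{\mu}e_{\mu}$. For $j,k\in\mathbb Z$ let $\mathcal H^{j,k}=\mathrm{span}\{e_{(2j,2k)},e_{(2j+1,2k)},e_{(2j+1,2k+1)},e_{(2j,2k+1)}\}$ and let $S_{\circlearrowleft}$ be the unitary acting on each $\mathcal H^{j,k}$ by the cyclic permutation $e_{(2j,2k)}\mapsto e_{(2j+1,2k)}\mapsto e_{(2j+1,2k+1)}\mapsto e_{(2j,2k+1)}\mapsto e_{(2j,2k)}$. For $L=(L_1,L_2)\in\mathbb N^{2}$ (positive integers) let $\Lambda_{L}=\mathbb Z^{2}\cap([-2L_{1},2L_{1}-1]\times[-2L_{2}+2,2L_{2}+1])$,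 $\mathrm{vol}\Lambda_L=4L_1L_2$, and for $v\in(2\mathbb Z)^2$ let $\Lambda_L+v$ be the translated box. Then $\ell^2(\Lambda_L+v)$ is the direct sum of $4L_1L_2$ of the blocks $\mathcal H^{j,k}$, and $U^{\Lambda_{L}+v}_{\omega}(0)$ denotes the restriction of $D_{\omega}S_{\circlearrowleft}$ to the invariant subspace $\ell^{2}(\Lambda_{L}+v)$. $\sigma(\cdot)$ denotes the spectrum. *)

(* Defs.v *)
From HB Require Import structures.
From mathcomp Require Import all_boot all_order all_algebra.
From mathcomp Require Import all_classical all_reals all_analysis.
From mathcomp Require Import complex.

Set Implicit Arguments.
Unset Strict Implicit.
Unset Printing Implicit Defensive.

Import Order.TTheory GRing.Theory Num.Theory.
Local Open Scope ring_scope.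
Local Open Scope classical_set_scope.

Definition site := (int * int)%type.

Definition par (x : int) : int := (x %% 2)%Z.

(* Predecessor of a site under the cyclic permutation of the 2x2 block
   H^{j,k}:  (2j,2k) -> (2j+1,2k) -> (2j+1,2k+1) -> (2j,2k+1) -> (2j,2k).
   S_cyc e_mu = e_{next mu}, hence (S_cyc f)(nu) = f (cyc_prev nu). *)
Definition cyc_prev (mu : site) : site :=
  let: (x, y) := mu in
  if par x == 0 then
    (if par y == 0 then (x, y + 1) else (x + 1, y))
  else
    (if par y == 0 then (x - 1, y) else (x, y - 1)).

(* Normalized Lebesgue measure on T is the image of the uniform law on [0,1)
   under t |-> e^{2 pi i t}. *)
Definition phase {R : realType} (t : R) : R[i] :=
  Complex (cos (2 * pi * t)) (sin (2 * pi * t)).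

Definition in_box (L1 L2 : nat) (v : site) (mu : site) : Prop :=
  (v.1 - 2 * (L1 : int) <= mu.1 <= v.1 + 2 * (L1 : int) - 1)%R /\
  (v.2 - 2 * (L2 : int) + 2 <= mu.2 <= v.2 + 2 * (L2 : int) + 1)%R.

Definition vol (L1 L2 : nat) : nat := 4 * L1 * L2.

(* ell^2(Lambda) modelled as the subspace of functions Z^2 -> C supported in
   Lambda (finite-dimensional). *)
Definition ell2_on {R : realType} (Lam : site -> Prop) : set (site -> R[i]) :=
  [set f | forall mu, ~ Lam mu -> f mu = 0].

(* U_omega(0) = D_omega S_cyc acting on functions:
   (D_omega S_cyc f)(nu) = omega_nu * f(cyc_prev nu). *)
Definition U_op {R : realType} (om : site -> R[i]) (f : site -> R[i]) :
  site -> R[i] := fun nu => om nu * f (cyc_prev nu).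

Definition spectrum_on {R : realType} (V : set (site -> R[i]))
    (T : (site -> R[i]) -> (site -> R[i])) : set R[i] :=
  [set lam | ~ (forall g, V g ->
       exists! f, V f /\ (fun nu => lam * f nu - T f nu) = g)].

Definition dist_set {R : realType} (z : R[i]) (A : set R[i]) : R :=
  inf [set (Normc.normc (z - lam)) | lam in A].

(* The phases (omega_mu) are i.i.d. with law dl (normalized Lebesgue measure
   on T): omega_mu = phase (theta mu) with theta mu i.i.d. uniform on [0,1). *)
Definition iid_uniform01 {d : measure_display} {Omega : measurableType d}
    {R : realType} (P : probability Omega R) (theta : site -> Omega -> R) : Prop :=
  (forall mu, measurable_fun setT (theta mu)) /\
  (forall mu (A : set R), measurable A ->
      P (theta mu @^-1` A) = (@lebesgue_measure R) (A `&` `[0%R, 1%R[)) /\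
  (forall (F : seq site) (A : site -> set R), uniq F ->
      (forall mu, measurable (A mu)) ->
      P (\bigcap_(mu in [set` F]) (theta mu @^-1` A mu)) =
      (\prod_(mu <- F) P (theta mu @^-1` A mu))%E).

(* Main.v *)
Require Import Defs.
From HB Require Import structures.
From mathcomp Require Import all_boot all_order all_algebra.
From mathcomp Require Import all_classical all_reals all_analysis.
From mathcomp Require Import complex.
From mathcomp Require Import zify ring lra measurable_realfun.
Import Order.TTheory GRing.Theory Num.Theory.

Module P_S1.
Local Open Scope ring_scope.

Ltac parsolve :=
  rewrite /cyc_prev /par /=;
  repeat (case: ifP => /eqP ? /=);
  try (lia);
  try (by congr pair; lia);
  try (by move=> [] *; lia).

Lemma prev4 (nu : site) :
  cyc_prev (cyc_prev (cyc_prev (cyc_prev nu))) = nu.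
Proof. case: nu => x y. parsolve. Qed.

Lemma prev1_neq (nu : site) : cyc_prev nu <> nu.
Proof. case: nu => x y; parsolve. Qed.
Lemma prev2_neq (nu : site) : cyc_prev (cyc_prev nu) <> nu.
Proof. case: nu => x y; parsolve. Qed.
Lemma prev3_neq (nu : site) : cyc_prev (cyc_prev (cyc_prev nu)) <> nu.
Proof. case: nu => x y; parsolve. Qed.

End P_S1.
Import P_S1.

Module P_S1b.
Local Open Scope ring_scope.

Lemma box_prev L1 L2 (v : site) (nu : site) :
  (2 %| v.1)%Z -> (2 %| v.2)%Z ->
  in_box L1 L2 v (cyc_prev nu) <-> in_box L1 L2 v nu.
Proof.
case: v => a b; case: nu => x y /= ha hb.
rewrite /in_box /=.
rewrite /cyc_prev /par /=;
repeat (case: ifP => /eqP ? /=);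
split => -[/andP[? ?] /andP[? ?]]; split; apply/andP; split; lia.
Qed.

End P_S1b.
Import P_S1b.

Module P_S2.
Local Open Scope ring_scope.
Local Open Scope classical_set_scope.

Section Spec.
Variable R : realType.
Notation C := (R[i]).
Notation p := cyc_prev.

Definition pp (om : site -> C) (nu : site) : C :=
  om nu * om (p nu) * om (p (p nu)) * om (p (p (p nu))).

Definition Fm (om : site -> C) (lam : C) (h : site -> C) (nu : site) : C :=
  lam ^+ 3 * h nu + lam ^+ 2 * om nu * h (p nu)
  + lam * om nu * om (p nu) * h (p (p nu))
  + om nu * om (p nu) * om (p (p nu)) * h (p (p (p nu))).

Lemma Fm_key om lam h nu :
  lam * Fm om lam h nu - om nu * Fm om lam h (p nu)
  = lam ^+ 4 * h nu - pp om nu * h nu.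
Proof.
rewrite /Fm /pp prev4; ring.
Qed.

Lemma pp_prev om nu : pp om (p nu) = pp om nu.
Proof. rewrite /pp prev4; ring. Qed.

Lemma telescope4 om lam d nu :
  lam ^+ 4 * d nu - pp om nu * d nu =
  lam ^+ 3 * (lam * d nu - om nu * d (p nu))
  + lam ^+ 2 * om nu * (lam * d (p nu) - om (p nu) * d (p (p nu)))
  + lam * om nu * om (p nu) * (lam * d (p (p nu)) - om (p (p nu)) * d (p (p (p nu))))
  + om nu * om (p nu) * om (p (p nu)) * (lam * d (p (p (p nu))) - om (p (p (p nu))) * d (p (p (p (p nu))))).
Proof. rewrite /pp prev4; ring. Qed.

Lemma spec_iff (om : site -> C) L1 L2 (v : site) (lam : C) :
  (forall nu, om nu != 0) ->
  (2 %| v.1)%Z -> (2 %| v.2)%Z ->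
  spectrum_on (ell2_on (in_box L1 L2 v)) (U_op om) lam <->
  exists nu, in_box L1 L2 v nu /\ lam ^+ 4 = pp om nu.
Proof.
move=> om0 hv1 hv2.
have boxp k nu : ~ in_box L1 L2 v nu -> ~ in_box L1 L2 v (iter k p nu).
  elim: k => [//|k IH] /= hn; rewrite box_prev //; exact: IH.
split.
- move=> hspec; apply: contrapT => hno.
  apply: hspec => g Vg.
  have hden nu : in_box L1 L2 v nu -> lam ^+ 4 - pp om nu != 0.
    move=> hin; rewrite subr_eq0; apply/eqP => he; apply: hno; by exists nu.
  pose f nu := Fm om lam g nu / (lam ^+ 4 - pp om nu).
  have Vf : ell2_on (in_box L1 L2 v) f.
    move=> nu hnu; rewrite /f /Fm.
    rewrite (Vg _ hnu) (Vg _ (boxp 1%N _ hnu)) (Vg _ (boxp 2%N _ hnu))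
      (Vg _ (boxp 3%N _ hnu)); rewrite !mulr0 !addr0 mul0r //.
  exists f; split.
    split => //; apply/funext => nu; rewrite /U_op.
    have [hin|hout] := pselect (in_box L1 L2 v nu); last first.
      rewrite (Vf _ hout) (Vf _ (boxp 1%N _ hout)).
      by rewrite (Vg _ hout) !mulr0 subrr.
    rewrite /f pp_prev !mulrA -mulrBl Fm_key -mulrBl mulrAC divff ?mul1r //; exact: hden.
  move=> f' [Vf' Ef'].
  apply/funext => nu; apply/eqP; rewrite -subr_eq0; apply/eqP.
  pose d x := f x - f' x.
  have ed x : lam * d x - om x * d (p x) = 0.
    have := congr1 (fun F => F x) Ef'.
    have [_ Ef] : ell2_on (in_box L1 L2 v) f /\ (fun nu => lam * f nu - U_op om f nu) = g.
      split => //; apply/funext => y; rewrite /U_op.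
      have [hin|hout] := pselect (in_box L1 L2 v y); last first.
        rewrite (Vf _ hout) (Vf _ (boxp 1%N _ hout)).
        by rewrite (Vg _ hout) !mulr0 subrr.
      rewrite /f pp_prev !mulrA -mulrBl Fm_key -mulrBl mulrAC divff ?mul1r //; exact: hden.
    have := congr1 (fun F => F x) Ef; rewrite /U_op /= /d => E1 E2.
    transitivity ((lam * f x - om x * f (p x)) - (lam * f' x - om x * f' (p x))); first ring.
    by rewrite E1 E2 subrr.
  have := telescope4 om lam d nu; rewrite !ed !mulr0 !addr0 -mulrBl => /eqP.
  rewrite mulf_eq0 => /orP [hz|/eqP //].
  have [hin|hout] := pselect (in_box L1 L2 v nu).
    by move: (hden _ hin); rewrite hz.
  by rewrite /d (Vf _ hout) (Vf' _ hout) subrr.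
- move=> [nu0 [hin0 he]] hspec.
  pose dl nu : C := if nu == nu0 then 1 else 0.
  have Vdl : ell2_on (in_box L1 L2 v) dl.
    by move=> nu hnu; rewrite /dl; case: eqP => // E; rewrite E in hnu.
  pose F := Fm om lam dl.
  have VF : ell2_on (in_box L1 L2 v) F.
    move=> nu hnu; rewrite /F /Fm.
    rewrite (Vdl _ hnu) (Vdl _ (boxp 1%N _ hnu)) (Vdl _ (boxp 2%N _ hnu))
      (Vdl _ (boxp 3%N _ hnu)); rewrite !mulr0 !addr0 //.
  have EF : (fun nu => lam * F nu - U_op om F nu) = (fun _ => 0).
    apply/funext => nu; rewrite /U_op /F Fm_key -mulrBl /dl.
    case: eqP => [->|_]; last by rewrite mulr0.
    by rewrite he subrr mul0r.
  have V0 : ell2_on (in_box L1 L2 v) (fun _ : site => 0 : C) by [].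
  have [f0 [[_ _] uniq0]] := hspec _ V0.
  have h1 := uniq0 F (conj VF EF).
  have h2 := uniq0 (fun _ => 0) (conj V0 _).
  have hF0 : F nu0 = 0.
    rewrite -h1 h2 //; apply/funext => nu; rewrite /U_op !mulr0 subrr //.
  move: hF0; rewrite /F /Fm /dl eqxx.
  have n1 : (p nu0 == nu0) = false by apply/eqP; exact: prev1_neq.
  have n2 : (p (p nu0) == nu0) = false by apply/eqP; exact: prev2_neq.
  have n3 : (p (p (p nu0)) == nu0) = false by apply/eqP; exact: prev3_neq.
  rewrite n1 n2 n3 !mulr0 !addr0 mulr1 => /eqP; rewrite expf_eq0 /= => /eqP hl.
  move: he; rewrite hl expr0n /= /pp => /esym/eqP.
  by rewrite !mulf_eq0 !(negbTE (om0 _)).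
Qed.
End Spec.

End P_S2.
Import P_S2.

Module P_S3.
Local Open Scope ring_scope.
Local Open Scope complex_scope.

Section Phase.
Variable R : realType.

Lemma phaseD (a b : R) : phase (a + b) = phase a * phase b.
Proof.
rewrite /phase mulrDr cosD sinD; simpc; congr Complex; ring.
Qed.

Lemma phase_quarter : phase (1 / 4 : R) = 'i.
Proof.
rewrite /phase (_ : 2 * pi * (1 / 4) = pi / 2 :> R); last by field.
by rewrite cos_pihalf sin_pihalf.
Qed.

Lemma i4 : ('i : R[i]) ^+ 4 = 1.
Proof. by rewrite !exprS expr0; simpc. Qed.

Lemma phase_neq0 (a : R) : phase a != 0.
Proof.
apply/eqP; rewrite /phase => -[hc hs].
have := cos2Dsin2 (2 * pi * a); rewrite hc hs expr0n /= addr0 => /eqP.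
by rewrite eq_sym oner_eq0.
Qed.

Lemma phaseMn (a : R) k : phase (a *+ k) = phase a ^+ k.
Proof.
elim: k => [|k IH]; first by rewrite mulr0n expr0 /phase mulr0 cos0 sin0.
by rewrite mulrS phaseD IH exprS.
Qed.

Lemma phase_k (s : R) (k : nat) :
  phase ((s + k%:R) / 4) = phase (s / 4) * 'i ^+ k.
Proof.
transitivity (phase (s / 4 + (1 / 4) *+ k)).
  by congr phase; rewrite -mulr_natl; field.
by rewrite phaseD phaseMn phase_quarter.
Qed.

Lemma phase4 (s : R) : phase (s / 4) ^+ 4 = phase s.
Proof.
by rewrite -phaseMn; congr phase; rewrite -mulr_natr; field.
Qed.

Lemma roots4 (s : R) (lam : R[i]) :
  lam ^+ 4 = phase s <-> exists k : 'I_4, lam = phase ((s + (k : nat)%:R) / 4).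
Proof.
split; last first.
  move=> [k ->]; rewrite phase_k exprMn phase4 -exprM mulnC exprM i4 expr1n mulr1 //.
move=> h.
set mu := phase (s / 4).
have mu0 : mu != 0 by exact: phase_neq0.
set zeta := lam / mu.
have hz : zeta ^+ 4 = 1.
  by rewrite /zeta exprMn exprVn h -phase4 -/mu divff // expf_neq0.
have hi : ('i : R[i]) * 'i = -1 by simpc.
have hf : (zeta - 1) * (zeta + 1) * ((zeta - 'i) * (zeta + 'i)) = 0.
  have -> : (zeta - 'i) * (zeta + 'i) = zeta ^+ 2 - 'i * 'i by ring.
  rewrite hi; transitivity (zeta ^+ 4 - 1); first ring.
  by rewrite hz subrr.
have lamE k : zeta = 'i ^+ k -> lam = phase ((s + k%:R) / 4).
  by move=> hk; rewrite phase_k -hk /zeta mulrC mulfVK.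
move/eqP: hf; rewrite !mulf_eq0 => /orP[/orP[]|/orP[]] /eqP e.
- exists ord0; apply: lamE; rewrite expr0; apply/eqP; rewrite -subr_eq0 e //.
- exists (Ordinal (isT : (2 < 4)%N)); apply: lamE; rewrite /= expr2 hi.
  by apply/eqP; rewrite -subr_eq0 opprK e.
- exists (Ordinal (isT : (1 < 4)%N)); apply: lamE; rewrite /= expr1.
  by apply/eqP; rewrite -subr_eq0 e.
- exists (Ordinal (isT : (3 < 4)%N)); apply: lamE; rewrite /= exprS expr2 mulrA hi mulN1r.
  by apply/eqP; rewrite -subr_eq0 opprK e.
Qed.

End Phase.

End P_S3.
Import P_S3.

Module P_S4.
Import numFieldNormedType.Exports.
Local Open Scope ring_scope.

Section Geom.
Variable R : realType.

Lemma cos1_pos : 0 < cos (1 : R). Proof. exact: cos1_gt0. Qed.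

Lemma cos_le1_mono (c : R) : 0 <= c <= 1 -> cos 1 <= cos c.
Proof.
move=> /andP[c0 c1].
have hpi : (1 : R) <= pi by have := @pi_ge2 R; lra.
rewrite leNgt ltr_cos ?in_itv /= ?c0 ?(le_trans c1 hpi) ?hpi //; last by lra.
by rewrite -leNgt.
Qed.

Lemma sin_lb (y : R) : 0 <= y <= 1 -> cos 1 * y <= sin y.
Proof.
move=> /andP[y0 y1].
have [->|yp] := eqVneq y 0; first by rewrite mulr0 sin0.
have ypos : 0 < y by rewrite lt_neqAle eq_sym yp.
have [|c] := @MVT R sin cos 0 y ypos (fun x _ => is_derive_sin x).
  exact/continuous_subspaceT/continuous_sin.
rewrite in_itv /= => /andP[c0 cy] E.
rewrite sin0 subr0 in E; rewrite E subr0 ler_pM2r //.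
apply: cos_le1_mono; apply/andP; split; [exact: ltW | exact: le_trans (ltW cy) y1].
Qed.

Lemma sin_lb2 (y : R) : 0 <= y <= pi / 2 -> cos 1 / 2 * y <= sin y.
Proof.
move=> /andP[y0 ypi].
have c1 := cos1_pos.
have p2 := @pihalf_lt2 R.
have p1 := @pihalf_ge1 R.
have cy : 0 <= cos 1 * y by rewrite mulr_ge0 // ltW.
have [y1|y1] := lerP y 1.
  have h := @sin_lb y; rewrite y0 y1 in h; have {}h := h isT.
  lra.
have h := @sin_lb 1; rewrite ler01 lexx in h; have {}h := h isT.
have hs : sin 1 <= sin y.
  rewrite leNgt ltr_sin ?in_itv /=; last by apply/andP; split; lra.
    by rewrite -leNgt; lra.
  by apply/andP; split; lra.
have : cos 1 * y <= cos 1 * 2 by rewrite ler_pM2l //; lra.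
lra.
Qed.

Lemma abs_sin_lb (x : R) : `|x| <= pi / 2 -> cos 1 / 2 * `|x| <= `|sin x|.
Proof.
move=> hx.
have [x0|x0] := lerP 0 x.
  rewrite ger0_norm // in hx.
  have hs : 0 <= sin x.
    by apply: sin_ge0_pi; apply/andP; split; have := @pi_ge0 R; lra.
  rewrite (ger0_norm x0) (ger0_norm hs); apply: sin_lb2; rewrite x0 hx //.
rewrite ltr0_norm // in hx *.
rewrite -normrN -sinN ger0_norm; first by apply: sin_lb2; rewrite hx; lra.
by apply: sin_ge0_pi; apply/andP; split; have := @pi_ge0 R; lra.
Qed.

Lemma normc_ge0 (w : R[i]) : 0 <= Normc.normc w.
Proof. by case: w => a b; exact: sqrtr_ge0. Qed.

Lemma normc_phaseB (u u' : R) :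
  Normc.normc (phase u - phase u') ^+ 2 = 4 * sin (pi * (u - u')) ^+ 2.
Proof.
rewrite /phase; simpc => /=.
rewrite sqr_sqrtr ?addr_ge0 ?sqr_ge0 //.
set A := 2 * pi * u; set B := 2 * pi * u'; set x := pi * (u - u').
have e1 := cos2Dsin2 A; have e2 := cos2Dsin2 B; have e3 := cosB A B.
have e4 : A - B = x *+ 2 by rewrite /A /B /x mulr2n; ring.
rewrite e4 cos_mulr2n cos2sin2 in e3.
rewrite mulr2n in e3.
nra.
Qed.

Lemma geom (z : R[i]) (eta u u' : R) : `|u - u'| <= 1 / 2 ->
  Normc.normc (z - phase u) <= eta -> Normc.normc (z - phase u') <= eta ->
  `|u - u'| <= eta / cos 1.
Proof.
move=> hd h1 h2.
have tri : Normc.normc (phase u - phase u') <= 2 * eta.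
  have := @le_normcD R (z - phase u') (- (z - phase u)).
  rewrite normcN (_ : z - phase u' + - (z - phase u) = phase u - phase u'); last first.
    by rewrite opprB addrC addrA subrK.
  move=> h; apply: (Order.le_trans h).
  have -> : 2 * eta = eta + eta by ring.
  exact: (lerD h2 h1).
have n0 := normc_ge0 (phase u - phase u').
have e := normc_phaseB u u'.
set s := sin (pi * (u - u')) in e.
have eta0 : 0 <= eta by apply: (Order.le_trans (normc_ge0 _) h1).
have hs2 : s ^+ 2 <= eta ^+ 2 by nra.
have hs : `|s| <= eta.
  rewrite ler_norml; apply/andP; split; nra.
have pi0 := @pi_gt0 R; have pi2 := @pi_ge2 R.
have c1 := cos1_pos.
have hx : `|pi * (u - u')| <= pi / 2.
  rewrite normrM gtr0_norm //.
  have : pi * `|u - u'| <= pi * (1 / 2) by rewrite ler_pM2l.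
  lra.
have hl := abs_sin_lb _ hx; rewrite -/s in hl.
rewrite normrM gtr0_norm // in hl.
rewrite ler_pdivlMr //.
have d0 := normr_ge0 (u - u').
have cd : 0 <= cos 1 * `|u - u'| by rewrite mulr_ge0 // ltW.
have : cos 1 * `|u - u'| * 2 <= cos 1 * `|u - u'| * pi.
  by rewrite ler_wpM2l.
move: hl; rewrite -/s.
nra.
Qed.
End Geom.

End P_S4.
Import P_S4.

Module P_S5.
Import numFieldNormedType.Exports.
Local Open Scope ring_scope.
Local Open Scope classical_set_scope.

Section Prob.
Variable R : realType.
Variables (d : measure_display) (Omega : measurableType d).
Variable P : probability Omega R.

Lemma ub_cst (I : eqType) (s : seq I) (F : I -> set Omega) (A : set Omega) (c : R) :
  0 <= c -> measurable A -> (forall x, measurable (F x)) ->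
  (forall x, x \in s -> (P (F x) <= c%:E)%E) ->
  A `<=` [set w | exists2 x, x \in s & F x w] -> (P A <= (c *+ size s)%:E)%E.
Proof.
move=> c0; elim: s A => [|x s IH] A mA mF hF hA.
  have -> : A = set0.
    by apply/seteqP; split => // w /hA [].
  by rewrite measure0 mulr0n.
have mD : measurable (A `\` F x) by apply: measurableD.
have h1 : (P A <= P (F x `|` (A `\` F x)))%E.
  apply: le_measure; rewrite ?inE //; first exact: measurableU.
  by move=> w Aw; have [Fw|nF] := pselect (F x w); [left|right].
apply: (Order.le_trans h1); apply: (Order.le_trans (measureU2 _ _ _)) => //.
rewrite /= mulrS EFinD; apply: leeD; first by apply: hF; rewrite mem_head.
apply: IH => //.
  by move=> y ys; apply: hF; rewrite in_cons ys orbT.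
move=> w [Aw nFw]; have [y] := hA w Aw; rewrite in_cons => /orP[/eqP ->//|ys] Fy.
by exists y.
Qed.


Variable theta : site -> Omega -> R.
Hypothesis Hiid : iid_uniform01 P theta.

Definition leb01 (A : set R) := (@lebesgue_measure R) (A `&` `[0%R, 1%R[).

Lemma prob4 (a b c e : site) (A1 A2 A3 A4 : set R) :
  uniq [:: a; b; c; e] ->
  measurable A1 -> measurable A2 -> measurable A3 -> measurable A4 ->
  P [set w | A1 (theta a w) /\ A2 (theta b w) /\ A3 (theta c w) /\ A4 (theta e w)]
  = (leb01 A1 * (leb01 A2 * (leb01 A3 * (leb01 A4 * 1))))%E.
Proof.
case: Hiid => _ [Hlaw Hind] hu m1 m2 m3 m4.
move: (hu); rewrite /= !in_cons !in_nil !orbF !negb_or => /andP[/andP[nab /andP[nac nae]] /andP[/andP[nbc nbe] /andP[nce _]]].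
pose A mu := if mu == a then A1 else if mu == b then A2 else if mu == c then A3 else A4.
have mA mu : measurable (A mu) by rewrite /A; repeat case: ifP => _ //.
have := Hind [:: a; b; c; e] A hu mA.
rewrite !big_cons big_nil.
have Ea : A a = A1 by rewrite /A eqxx.
have Eb : A b = A2 by rewrite /A eq_sym (negbTE nab) eqxx.
have Ec : A c = A3 by rewrite /A eq_sym (negbTE nac) eq_sym (negbTE nbc) eqxx.
have Ee : A e = A4 by rewrite /A eq_sym (negbTE nae) eq_sym (negbTE nbe) eq_sym (negbTE nce).
rewrite Ea Eb Ec Ee !Hlaw // => <-.
congr (P _); apply/seteqP; split => w /=.
  move=> [h1 [h2 [h3 h4]]] mu; rewrite /= !in_cons in_nil => /orP[/eqP->|/orP[/eqP->|/orP[/eqP->|/orP[/eqP->|//]]]];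
  by rewrite /preimage /= ?Ea ?Eb ?Ec ?Ee.
move=> H.
have ha := H a; have hb := H b; have hc := H c; have he := H e.
rewrite /preimage /= !in_cons !eqxx ?orbT /= Ea Eb Ec Ee in ha hb hc he.
by split; [apply: ha|split; [apply: hb|split; [apply: hc|apply: he]]].
Qed.

End Prob.

End P_S5.
Import P_S5.

Module P_S5c.
Import numFieldNormedType.Exports.
Local Open Scope ring_scope.
Local Open Scope classical_set_scope.

Section Leb.
Variable R : realType.

Lemma leb01_le (A : set R) : measurable A -> (@leb01 R A <= (@lebesgue_measure R) A)%E.
Proof.
move=> mA; apply: le_measure.
- by rewrite inE; apply: measurableI => //; exact: measurable_itv.
- by rewrite inE.
- by move=> x [].
Qed.

Lemma leb01_cc (x y : R) : x <= y -> (@leb01 R `[x, y] <= (y - x)%:E)%E.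
Proof.
move=> xy; have h := leb01_le `[x, y] (measurable_itv _).
apply: (Order.le_trans h).
rewrite lebesgue_measure_itv /=.
case: ifP => _; first by rewrite -EFinD /= lexx.
by rewrite /= subr_ge0 xy.
Qed.

Lemma leb01_co (x y : R) : x <= y -> (@leb01 R `[x, y[ <= (y - x)%:E)%E.
Proof.
move=> xy; have h := leb01_le `[x, y[ (measurable_itv _).
apply: (Order.le_trans h).
rewrite lebesgue_measure_itv /=.
case: ifP => _; first by rewrite -EFinD /= lexx.
by rewrite /= subr_ge0 xy.
Qed.

Lemma leb01_out : @leb01 R (~` `[(0:R), 1[) = 0%E.
Proof.
by rewrite /leb01 setICl measure0.
Qed.

Lemma grid (x : R) (N : nat) : (0 < N)%N -> 0 <= x < 1 ->
  exists2 i, (i < N)%N & `[i%:R / N%:R, i.+1%:R / N%:R[ x.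
Proof.
move=> N0 /andP[x0 x1].
have Np : 0 < N%:R :> R by rewrite ltr0n.
have Nx0 : 0 <= x * N%:R by rewrite mulr_ge0 // ltW.
exists (Num.truncn (x * N%:R)).
  rewrite Num.Theory.truncn_lt_nat //.
  by rewrite -[X in _ < X]mul1r ltr_pM2r.
have /andP[h1 h2] := Num.Theory.truncn_itv Nx0.
rewrite /= in_itv /=; apply/andP; split.
  by rewrite ler_pdivrMr.
by rewrite ltr_pdivlMr.
Qed.
End Leb.

End P_S5c.
Import P_S5c.

Module P_S5b.
Import numFieldNormedType.Exports.
Local Open Scope ring_scope.
Local Open Scope classical_set_scope.

Section Prob2.
Variable R : realType.
Variables (d : measure_display) (Omega : measurableType d).
Variable P : probability Omega R.
Variable theta : site -> Omega -> R.
Hypothesis Hiid : iid_uniform01 P theta.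

Lemma mpre mu (A : set R) : measurable A -> measurable (theta mu @^-1` A).
Proof. case: Hiid => Hm _ mA; rewrite -[_ @^-1` _]setTI; exact: Hm. Qed.

Lemma m4 (a b c e : site) (A1 A2 A3 A4 : set R) :
  measurable A1 -> measurable A2 -> measurable A3 -> measurable A4 ->
  measurable [set w | A1 (theta a w) /\ A2 (theta b w) /\ A3 (theta c w) /\ A4 (theta e w)].
Proof.
move=> m1 m2 m3 m4.
have -> : [set w | A1 (theta a w) /\ A2 (theta b w) /\ A3 (theta c w) /\ A4 (theta e w)]
  = theta a @^-1` A1 `&` (theta b @^-1` A2 `&` (theta c @^-1` A3 `&` theta e @^-1` A4)) by [].
by repeat apply: measurableI; apply: mpre.
Qed.

Variables (z : R[i]) (eta : R) (k : nat).

Definition Sfun (a b c e : site) w := theta a w + theta b w + theta c w + theta e w.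
Definition Ev (a b c e : site) :=
  [set w | Normc.normc (z - phase ((Sfun a b c e w + k%:R) / 4)) <= eta].

Lemma Ev_measurable a b c e : measurable (Ev a b c e).
Proof.
case: Hiid => Hm _.
have mS : measurable_fun setT (Sfun a b c e).
  by apply: measurable_funD; [apply: measurable_funD; [apply: measurable_funD|]|].
have mArg : measurable_fun setT (fun w => 2 * pi * ((Sfun a b c e w + k%:R) / 4)).
  apply: measurable_funM; first exact: measurable_cst.
  apply: measurable_funM; last exact: measurable_cst.
  by apply: measurable_funD => //; exact: measurable_cst.
have mcos : measurable_fun setT (cos \o (fun w => 2 * pi * ((Sfun a b c e w + k%:R) / 4))).
  by apply: measurableT_comp => //; apply: continuous_measurable_fun; exact: continuous_cos.
have msin : measurable_fun setT (sin \o (fun w => 2 * pi * ((Sfun a b c e w + k%:R) / 4))).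
  by apply: measurableT_comp => //; apply: continuous_measurable_fun; exact: continuous_sin.
have zE : z = Complex (complex.Re z) (complex.Im z) by case: z.
set za := complex.Re z; set zb := complex.Im z.
pose g w := (za - cos (2 * pi * ((Sfun a b c e w + k%:R) / 4))) ^+ 2
   + (zb - sin (2 * pi * ((Sfun a b c e w + k%:R) / 4))) ^+ 2.
have mg : measurable_fun setT g.
  apply: measurable_funD; apply: measurable_funX; apply: measurable_funB => //;
    exact: measurable_cst.
have msq : measurable_fun setT (@Num.sqrt R).
  by apply: continuous_measurable_fun; exact: sqrt_continuous.
pose h w := Num.sqrt (g w).
have mh : measurable_fun setT h by exact: (measurableT_comp msq mg).
have mb := measurable_fun_ler mh (measurable_cst eta).
have mt : measurable [set true] by [].
have := mb measurableT _ mt; rewrite setTI.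
have -> : Ev a b c e = (fun w => h w <= eta) @^-1` [set true].
  have hE w : Ev a b c e w <-> h w <= eta.
    rewrite /Ev /h /g /phase /= {1}zE; simpc; rewrite /=; done.
  by apply/seteqP; split => w /=; move/hE.
done.
Qed.


Lemma Ev_bound a b c e : uniq [:: a; b; c; e] -> 0 < eta ->
  (P (Ev a b c e) <= ((8 / cos 1 + 1) * eta)%:E)%E.
Proof.
move=> hu eta0.
have mEv := Ev_measurable a b c e.
have c1 := @cos1_pos R.
set N := (Num.truncn (6 / eta)).+3.
have N3 : (3 <= N)%N by rewrite /N !ltnS.
have Np : 0 < N%:R :> R by rewrite ltr0n; apply: leq_trans N3.
have N3r : 3 <= N%:R :> R by rewrite (ler_nat R 3 N).
have hN6 : 6 / N%:R <= eta.
  have h1 := Num.Theory.truncnS_gt (6 / eta).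
  have h2 : (Num.truncn (6 / eta)).+1%:R <= N%:R :> R by rewrite ler_nat /N ltnS leqW // leqnSn.
  have h3 : 6 / eta < N%:R := lt_le_trans h1 h2.
  by rewrite ler_pdivrMr // mulrC -ler_pdivrMr // ltW.
have hN3 : 3 / N%:R <= 1 :> R by rewrite ler_pdivrMr // mul1r.
have hN30 : 0 <= 3 / N%:R :> R by rewrite divr_ge0 // ltW.
set r := 4 * eta / cos 1 + 3 / N%:R.
have r0 : 0 <= r by rewrite addr_ge0 // divr_ge0 ?mulr_ge0 // ltW.
set I01 : set R := `[(0:R), 1[.
have mI01 : measurable I01 by exact: measurable_itv.
pose Good := [set w | I01 (theta a w) /\ I01 (theta b w) /\ I01 (theta c w) /\ I01 (theta e w)].
have mGood : measurable Good by apply: m4.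
pose cv (q : nat * nat * nat) : R := (q.1.1 + q.1.2 + q.2)%:R / N%:R.
pose G q := [set t : R | I01 t /\ exists T, cv q <= T < cv q + 3 / N%:R /\
   Normc.normc (z - phase ((t + T + k%:R) / 4)) <= eta].
pose t0 q := xget 0 (G q).
pose J (i : nat) : set R := `[i%:R / N%:R, i.+1%:R / N%:R[.
pose F (q : nat * nat * nat) := [set w | `[t0 q - r, t0 q + r] (theta a w) /\
   J q.1.1 (theta b w) /\ J q.1.2 (theta c w) /\ J q.2 (theta e w)].
have mF q : measurable (F q) by apply: m4; exact: measurable_itv.
pose cells := [seq (x, l) | x <- [seq (i, j) | i <- iota 0 N, j <- iota 0 N], l <- iota 0 N].
have szc : size cells = (N * N * N)%N by rewrite !size_allpairs size_iota.
have stepA : (P (Ev a b c e `&` Good) <= ((2 * r / N%:R ^+ 3) *+ size cells)%:E)%E.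
  apply: ub_cst.
  - by rewrite divr_ge0 ?mulr_ge0 // exprn_ge0 // ltW.
  - exact: measurableI.
  - exact: mF.
  - move=> q _.
    rewrite (@prob4 R d Omega P theta Hiid) //; try exact: measurable_itv.
    have B1 : (@leb01 R `[(t0 q - r)%R, (t0 q + r)%R] <= ((2 * r)%R)%:E)%E.
      have := @leb01_cc R (t0 q - r) (t0 q + r).
      have -> : t0 q + r - (t0 q - r) = 2 * r by ring.
      apply; lra.
    have BJ i : (@leb01 R (J i) <= ((1 / N%:R)%R)%:E)%E.
      have := @leb01_co R (i%:R / N%:R) (i.+1%:R / N%:R).
      have -> : i.+1%:R / N%:R - i%:R / N%:R = 1 / N%:R :> R.
        by rewrite -natr1; field; rewrite gt_eqF.
      apply; rewrite ler_pM2r ?invr_gt0 // ler_nat //.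
    have ge0 (A : set R) : (0 <= @leb01 R A)%E by exact: measure_ge0.
    apply: (Order.le_trans (lee_pmul (ge0 _) _ B1 (lee_pmul (ge0 _) _ (BJ _)
       (lee_pmul (ge0 _) _ (BJ _) (lee_pmul (ge0 _) _ (BJ _) (Order.le_refl 1%E)))))).
    + by repeat apply: mule_ge0.
    + by repeat apply: mule_ge0.
    + by repeat apply: mule_ge0.
    + by [].
    rewrite mule1 -!EFinM.
    have -> : 2 * r * (1 / N%:R * (1 / N%:R * (1 / N%:R))) = 2 * r / N%:R ^+ 3.
      by field; rewrite gt_eqF.
    exact: Order.le_refl.
  - move=> w [Evw [ga [gb [gc ge]]]].
    have N0 : (0 < N)%N by apply: leq_trans N3.
    have I01P x : I01 x -> 0 <= x < 1 by rewrite /I01 /= in_itv.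
    have [i iN hi] := @grid R (theta b w) N N0 (I01P _ gb).
    have [j jN hj] := @grid R (theta c w) N N0 (I01P _ gc).
    have [l lN hl] := @grid R (theta e w) N N0 (I01P _ ge).
    exists ((i, j), l).
      apply: allpairs_f; first apply: allpairs_f.
      - by have := mem_iota 0 N i; rewrite add0n iN /=.
      - by have := mem_iota 0 N j; rewrite add0n jN /=.
      - by have := mem_iota 0 N l; rewrite add0n lN /=.
    split; last by [].
    set t := theta a w.
    set T := theta b w + theta c w + theta e w.
    have JP m x : J m x -> m%:R / N%:R <= x < m%:R / N%:R + 1 / N%:R.
      rewrite /J /= in_itv /= -natr1 mulrDl => /andP[h1 h2].
      by apply/andP; split.
    have /andP[bi1 bi2] := JP _ _ hi.
    have /andP[bj1 bj2] := JP _ _ hj.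
    have /andP[bl1 bl2] := JP _ _ hl.
    have cvE : cv ((i, j), l) = i%:R / N%:R + j%:R / N%:R + l%:R / N%:R.
      by rewrite /cv /= !natrD !mulrDl.
    have hT : cv ((i, j), l) <= T < cv ((i, j), l) + 3 / N%:R.
      rewrite cvE /T; apply/andP; split; first lra.
      have -> : 3 / N%:R = 1 / N%:R + 1 / N%:R + 1 / N%:R :> R by field; rewrite gt_eqF.
      lra.
    have Gt : G ((i, j), l) t.
      split => //; exists T; split => //.
      move: Evw; rewrite /Ev /= (_ : Sfun a b c e w = t + T) //.
      by rewrite /Sfun /t /T; ring.
    have := @xgetPex _ 0 (G ((i, j), l)) (ex_intro _ t Gt).
    rewrite -/(t0 _) => -[ga0 [T0 [hT0 hn0]]].
    have /andP[t1 t2] := I01P _ ga.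
    rewrite -/t in t1 t2.
    have /andP[t01 t02] := I01P _ ga0.
    move: hT hT0 => /andP[hT1 hT2] /andP[hT01 hT02].
    have hn : Normc.normc (z - phase ((t + T + k%:R) / 4)) <= eta.
      by case: Gt => _ [T' _]; move: Evw; rewrite /Ev /= (_ : Sfun a b c e w = t + T) //;
         rewrite /Sfun /t /T; ring.
    have hd : `|(t + T + k%:R) / 4 - (t0 ((i, j), l) + T0 + k%:R) / 4| <= 1 / 2.
      rewrite ler_norml; apply/andP; split; lra.
    have := @geom R z eta _ _ hd hn hn0.
    rewrite ler_norml => /andP[g1 g2].
    rewrite /= in_itv /=; apply/andP; split; rewrite /r; lra.
have stepB : (P (Ev a b c e `\` Good) <= (0 *+ size [:: a; b; c; e])%:E)%E.
  apply: (@ub_cst R d Omega P _ [:: a; b; c; e] (fun mu => theta mu @^-1` (~` I01))).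
  - by [].
  - exact: measurableD.
  - by move=> mu; apply: mpre; apply: measurableC.
  - move=> mu _; case: Hiid => _ [Hlaw _]; rewrite Hlaw; last exact: measurableC.
    by rewrite setICl measure0.
  - move=> w [Evw nG].
    have [ha|ha] := pselect (I01 (theta a w)); last by exists a; rewrite ?mem_head.
    have [hb|hb] := pselect (I01 (theta b w)); last by exists b; rewrite // !inE eqxx ?orbT.
    have [hc|hc] := pselect (I01 (theta c w)); last by exists c; rewrite // !inE eqxx ?orbT.
    have [he|he] := pselect (I01 (theta e w)); last by exists e; rewrite // !inE eqxx ?orbT.
    by exfalso; apply: nG.
have stepC : (P (Ev a b c e) <= P (Ev a b c e `&` Good) + P (Ev a b c e `\` Good))%E.
  apply: (Order.le_trans _ (measureU2 _ _ _)); [|exact: measurableI|exact: measurableD].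
  apply: le_measure; rewrite ?inE; [exact: mEv| |].
    by apply: measurableU; [exact: measurableI|exact: measurableD].
  by move=> w Ew; have [g|g] := pselect (Good w); [left|right].
have H2 := leeD stepA stepB.
rewrite -EFinD in H2.
have fin : (2 * r / N%:R ^+ 3) *+ size cells + 0 *+ size [:: a; b; c; e]
    <= (8 / cos 1 + 1) * eta.
  rewrite mul0rn addr0 szc -mulr_natr !natrM.
  have -> : 2 * r / N%:R ^+ 3 * (N%:R * N%:R * N%:R) = 2 * r.
    by field; rewrite gt_eqF.
  rewrite /r.
  have -> : 2 * (4 * eta / cos 1 + 3 / N%:R) = 8 * (eta / cos 1) + 6 / N%:R by ring.
  have -> : (8 / cos 1 + 1) * eta = 8 * (eta / cos 1) + eta by field; rewrite gt_eqF.
  lra.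
have H3 : (((2 * r / N%:R ^+ 3) *+ size cells + 0 *+ size [:: a; b; c; e])%:E
    <= ((8 / cos 1 + 1) * eta)%:E)%E by rewrite lee_fin.
exact: (Order.le_trans stepC (Order.le_trans H2 H3)).
Qed.

End Prob2.

End P_S5b.
Import P_S5b.

Module P_S6a.
Local Open Scope ring_scope.

Definition site_of (L1 L2 : nat) (v : site) (i j : nat) : site :=
  (v.1 - 2 * (L1 : int) + (i : int), v.2 - 2 * (L2 : int) + 2 + (j : int)).

Lemma box_site L1 L2 v i j : (i < 4 * L1)%N -> (j < 4 * L2)%N ->
  in_box L1 L2 v (site_of L1 L2 v i j).
Proof.
move=> hi hj; rewrite /in_box /site_of /=; split; apply/andP; split; lia.
Qed.

Lemma box_enum L1 L2 v mu : in_box L1 L2 v mu ->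
  exists i j, [/\ (i < 4 * L1)%N, (j < 4 * L2)%N & mu = site_of L1 L2 v i j].
Proof.
case: mu => x y; rewrite /in_box /= => -[/andP[h1 h2] /andP[h3 h4]].
exists (absz (x - (v.1 - 2 * (L1 : int)))%R), (absz (y - (v.2 - 2 * (L2 : int) + 2))%R).
split; try lia.
rewrite /site_of; congr pair; lia.
Qed.

End P_S6a.
Import P_S6a.

Module P_S6.
Import numFieldNormedType.Exports.
Local Open Scope ring_scope.
Local Open Scope classical_set_scope.

Notation p := cyc_prev.

Lemma uniq4 (nu : site) : uniq [:: nu; p nu; p (p nu); p (p (p nu))].
Proof.
have n1 : (nu == p nu) = false by apply/eqP => h; exact: (prev1_neq _ (esym h)).
have n2 : (nu == p (p nu)) = false by apply/eqP => h; exact: (prev2_neq _ (esym h)).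
have n3 : (nu == p (p (p nu))) = false by apply/eqP => h; exact: (prev3_neq _ (esym h)).
have n4 : (p nu == p (p nu)) = false by apply/eqP => h; exact: (prev1_neq _ (esym h)).
have n5 : (p nu == p (p (p nu))) = false by apply/eqP => h; exact: (prev2_neq _ (esym h)).
have n6 : (p (p nu) == p (p (p nu))) = false by apply/eqP => h; exact: (prev1_neq _ (esym h)).
by rewrite /= !in_cons n1 n2 n3 n4 n5 n6.
Qed.

Definition xs (L1 L2 : nat) : seq (nat * nat * nat) :=
  [seq (x, k) | x <- [seq (i, j) | i <- iota 0 (4 * L1), j <- iota 0 (4 * L2)],
                k <- iota 0 4].

Lemma mem_xs L1 L2 (i j k : nat) :
  (i < 4 * L1)%N -> (j < 4 * L2)%N -> (k < 4)%N -> (i, j, k) \in xs L1 L2.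
Proof.
move=> hi hj hk; apply: allpairs_f; first apply: allpairs_f.
- by have := mem_iota 0 (4 * L1) i; rewrite add0n hi /=.
- by have := mem_iota 0 (4 * L2) j; rewrite add0n hj /=.
- by have := mem_iota 0 4 k; rewrite add0n hk /=.
Qed.

Lemma xs_mem L1 L2 (x : nat * nat * nat) : x \in xs L1 L2 ->
  [/\ (x.1.1 < 4 * L1)%N, (x.1.2 < 4 * L2)%N & (x.2 < 4)%N].
Proof.
move=> /allpairsP [[y k] [hy hk ->]].
rewrite mem_iota add0n in hk.
move: hy => /allpairsP [[i j] [hi hj ->]].
rewrite mem_iota add0n in hi; rewrite mem_iota add0n in hj.
by split.
Qed.

Lemma size_xs L1 L2 : size (xs L1 L2) = (4 * L1 * (4 * L2) * 4)%N.
Proof. by rewrite /xs !size_allpairs !size_iota. Qed.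

Lemma fin_min (R : realType) (T : eqType) (s : seq T) (f : T -> R) (eta : R) :
  (forall x, x \in s -> eta < f x) ->
  exists2 m, eta < m & forall x, x \in s -> m <= f x.
Proof.
elim: s => [|y s IH] H.
  by exists (eta + 1) => //; lra.
have [m hm hs] : exists2 m, eta < m & forall x, x \in s -> m <= f x.
  by apply: IH => x xs; apply: H; rewrite in_cons xs orbT.
have hy := H y (mem_head _ _).
have [le|lt] := lerP (f y) m.
  exists (f y) => // x; rewrite in_cons => /orP[/eqP->//|/hs]; exact: le_trans.
exists m => // x; rewrite in_cons => /orP[/eqP->|/hs//]; exact: ltW.
Qed.

Section Char.
Variable R : realType.
Variable th : site -> R.
Variables (L1 L2 : nat) (v : site).
Hypotheses (hv1 : (2 %| v.1)%Z) (hv2 : (2 %| v.2)%Z).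

Definition Ssum (nu : site) := th nu + th (p nu) + th (p (p nu)) + th (p (p (p nu))).

Definition lamx (x : nat * nat * nat) : R[i] :=
  phase ((Ssum (site_of L1 L2 v x.1.1 x.1.2) + x.2%:R) / 4).

Lemma spec_char lam :
  spectrum_on (ell2_on (in_box L1 L2 v)) (U_op (fun mu => phase (th mu))) lam <->
  exists2 x, x \in xs L1 L2 & lam = lamx x.
Proof.
have om0 mu : phase (th mu) != 0 by exact: phase_neq0.
have ppE nu : @pp R (fun mu => phase (th mu)) nu = phase (Ssum nu).
  by rewrite /pp /Ssum !phaseD.
rewrite (@spec_iff R _ L1 L2 v lam om0 hv1 hv2).
split.
- move=> [nu [hb he]].
  have [i [j [hi hj Enu]]] := @box_enum _ _ _ _ hb.
  rewrite ppE in he; have [k ->] := (roots4 _ _ _).1 he.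
  exists ((i, j), (k : nat)); first by apply: mem_xs.
  by rewrite /lamx /= -Enu.
- move=> [[[i j] k] hx ->].
  have [hi hj hk] := @xs_mem _ _ _ hx.
  exists (site_of L1 L2 v i j); split; first exact: box_site.
  rewrite ppE; apply/(roots4 _ _ _).2; by exists (Ordinal hk).
Qed.

Lemma dist_char (z : R[i]) (eta : R) : (0 < L1)%N -> (0 < L2)%N ->
  (dist_set z (spectrum_on (ell2_on (in_box L1 L2 v)) (U_op (fun mu => phase (th mu)))) <= eta)
  <-> exists2 x, x \in xs L1 L2 & Normc.normc (z - lamx x) <= eta.
Proof.
move=> L10 L20.
set Sp := spectrum_on _ _.
set D := [set Normc.normc (z - lam) | lam in Sp].
have hlb : has_lbound D.
  by exists 0 => _ [lam _ <-]; exact: normc_ge0.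
have x0 : (0, 0, 0)%N \in xs L1 L2 by apply: mem_xs; rewrite ?muln_gt0 ?L10 ?L20.
have neD : D !=set0.
  by exists (Normc.normc (z - lamx (0, 0, 0)%N)); exists (lamx (0,0,0)%N) => //; apply/spec_char; exists (0,0,0)%N.
rewrite /dist_set -/Sp -/D.
split.
- move=> hinf; apply: contrapT => hno.
  have hall x : x \in xs L1 L2 -> eta < Normc.normc (z - lamx x).
    move=> hx; rewrite ltNge; apply/negP => hle; apply: hno; by exists x.
  have [m hm hmx] := @fin_min _ _ _ _ _ hall.
  have : m <= inf D.
    apply: lb_le_inf => // _ [lam hlam <-].
    have [x hx ->] := (spec_char lam).1 hlam.
    exact: hmx.
  lra.
- move=> [x hx hle].
  have hD : D (Normc.normc (z - lamx x)).
    by exists (lamx x) => //; apply/spec_char; exists x.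
  exact: (le_trans (ge_inf hlb hD) hle).
Qed.
End Char.

End P_S6.
Import P_S6.

Module P_S7.
Local Open Scope ring_scope.
Local Open Scope classical_set_scope.

Lemma mUnion (R : realType) d (Omega : measurableType d) (I : eqType) (s : seq I)
  (F : I -> set Omega) : (forall x, measurable (F x)) ->
  measurable [set w | exists2 x, x \in s & F x w].
Proof.
move=> mF; elim: s => [|y s IH].
  by have -> : [set w | exists2 x, x \in [::] & F x w] = set0
    by apply/seteqP; split => // w [].
have -> : [set w | exists2 x, x \in y :: s & F x w] =
    F y `|` [set w | exists2 x, x \in s & F x w].
  apply/seteqP; split => w.
    by move=> [x]; rewrite in_cons => /orP[/eqP -> |hx] h; [left|right; exists x].
  by move=> [h|[x hx h]]; [exists y; rewrite ?mem_head|exists x; rewrite ?in_cons ?hx ?orbT].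
exact: measurableU.
Qed.


End P_S7.
Import P_S7.

Local Open Scope ring_scope.
Local Open Scope classical_set_scope.

Theorem proposition1 (R : realType) :
  exists C eps0 : R, 0 < C /\ 0 < eps0 /\
  forall (d : measure_display) (Omega : measurableType d)
         (P : probability Omega R) (theta : site -> Omega -> R),
  iid_uniform01 P theta ->
  forall (L1 L2 : nat) (eta : R), (0 < L1)%N -> (0 < L2)%N -> 0 < eta ->
  eta * (vol L1 L2)%:R <= eps0 ->
  forall v : site, (2 %| v.1)%Z -> (2 %| v.2)%Z ->
  forall z : R[i], Normc.normc z != 1 ->
  (P [set w | (dist_set z
        (spectrum_on (ell2_on (in_box L1 L2 v))
                     (U_op (fun mu => phase (theta mu w)))) <= eta)%R]
  <= (C * eta * (vol L1 L2)%:R)%:E)%E.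
Proof.
have c1 := @cos1_pos R.
exists (16 * (8 / cos 1 + 1)), 1.
split; first by rewrite mulr_gt0 // addr_gt0 // divr_gt0.
split; first by [].
move=> d Omega P theta Hiid L1 L2 eta L10 L20 eta0 _ v hv1 hv2 z _.
pose nu (x : nat * nat * nat) := site_of L1 L2 v x.1.1 x.1.2.
pose F (x : nat * nat * nat) := @Ev R d Omega theta z eta x.2
   (nu x) (cyc_prev (nu x)) (cyc_prev (cyc_prev (nu x))) (cyc_prev (cyc_prev (cyc_prev (nu x)))).
have EA : [set w | (dist_set z
        (spectrum_on (ell2_on (in_box L1 L2 v))
                     (U_op (fun mu => phase (theta mu w)))) <= eta)%R]
  = [set w | exists2 x, x \in xs L1 L2 & F x w].
  apply/seteqP; split => w /=.
    move/(@dist_char R (fun mu => theta mu w) L1 L2 v hv1 hv2 z eta L10 L20).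
    by move=> [x hx h]; exists x => //; exact: h.
  move=> [x hx h]; apply/(@dist_char R (fun mu => theta mu w) L1 L2 v hv1 hv2 z eta L10 L20).
  by exists x => //; exact: h.
rewrite EA.
have mF x : measurable (F x) by exact: (@Ev_measurable R d Omega P theta Hiid).
have c0 : 0 <= (8 / cos 1 + 1) * eta by rewrite mulr_ge0 // ?addr_ge0 // ?divr_ge0 // ltW.
have := @ub_cst R d Omega P _ (xs L1 L2) F _ ((8 / cos 1 + 1) * eta) c0 (@mUnion R d Omega _ (xs L1 L2) F mF) mF.
move=> /(_ _ (fun _ h => h)) H.
have H1 : (P [set w | exists2 x, x \in xs L1 L2 & F x w] <=
    (((8 / cos 1 + 1) * eta) *+ size (xs L1 L2))%:E)%E.
  apply: H => x _; apply: (@Ev_bound R d Omega P theta Hiid) => //; exact: uniq4.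
have -> : 16 * (8 / cos 1 + 1) * eta * (vol L1 L2)%:R =
    ((8 / cos 1 + 1) * eta) *+ size (xs L1 L2).
  rewrite size_xs /vol -mulr_natr !natrM; ring.
exact: H1.
Qed.
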